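(* The proof system $\mathbb{SKHM}$ is sound with respect to the class of all models: every formula of $\mathbf{L_{Khm}}$ derivable in $\mathbb{SKHM}$ is true at every state of every model.
   Context: Fix a countable set of proposition letters $\mathbf{P}$ and a countable non-empty set of action symbols $\Sigma$. The language $\mathbf{L_{Khm}}$ is given by $\phi ::= p \mid \neg\phi \mid (\phi\wedge\phi) \mid \mathcal{K}hm(\phi,\phi,\phi)$ with $p\in\mathbf{P}$; $\top,\bot,\vee,\to$ are the usual abbreviations, and $\mathcal{U}\phi$ abbreviates $\mathcal{K}hm(\neg\phi,\top,\bot)$. A model is a triple $(S,\mathcal{R},\mathcal{V})$ with $S$ a non-empty set, $\mathcal{R}:\Sigma\to 2^{S\times S}$, and $\mathcal{V}:S\to 2^{\mathbf{P}}$. Write $s\xrightarrow{a}t$ if $(s,t)\in\mathcal{R}(a)$; for $\sigma=a_1\cdots a_n\in\Sigma^*$ write $s\xrightarrow{\sigma}t$ if there are $s_2,\dots,s_n$ with $s\xrightarrow{a_1}s_2\xrightarrow{a_2}\cdots\xrightarrow{a_{n-1}}s_n\xrightarrow{a_n}t$ (for the empty sequence $\epsilon$, $s\xrightarrow{\epsilon}s$). Let $\sigma_k$ be the initial segment $a_1\cdots a_k$ ($\sigma_0=\epsilon$). $\sigma$ is strongly executable at $s'$ if for each $0\le k<n$, $s'\xrightarrow{\sigma_k}t$ implies $t$ has at least one $a_{k+1}$-successor. $\sigma$ is strongly $\chi$-executable at $s'$ if it is strongly executable at $s'$ and $s'\xrightarrow{\sigma_k}t$ implies $\mathcal{M},t\vDash\chi$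 for all $0<k<n$. Semantics: Booleans as usual, $\mathcal{M},s\vDash p$ iff $p\in\mathcal{V}(s)$, and $\mathcal{M},s\vDash\mathcal{K}hm(\psi,\chi,\phi)$ iff there is $\sigma\in\Sigma^*$ such that for every $s'$ with $\mathcal{M},s'\vDash\psi$, $\sigma$ is strongly $\chi$-executable at $s'$ and $\mathcal{M},t\vDash\phi$ for all $t$ with $s'\xrightarrow{\sigma}t$. The system $\mathbb{SKHM}$ has axioms: all propositional tautologies; DISTU: $\mathcal{U}p\wedge\mathcal{U}(p\to q)\to\mathcal{U}q$; TU: $\mathcal{U}p\to p$; 4KhmU: $\mathcal{K}hm(p,o,q)\to\mathcal{U}\mathcal{K}hm(p,o,q)$; 5KhmU: $\neg\mathcal{K}hm(p,o,q)\to\mathcal{U}\neg\mathcal{K}hm(p,o,q)$; EMPKhm: $\mathcal{U}(p\to q)\to\mathcal{K}hm(p,\bot,q)$; COMPKhm: $\mathcal{K}hm(p,o,r)\wedge\mathcal{K}hm(r,o,q)\wedge\mathcal{U}(r\to o)\to\mathcal{K}hm(p,o,q)$; ONEKhm: $\mathcal{K}hm(p,o,q)\wedge\neg\mathcal{K}hm(p,\bot,q)\to\mathcal{K}hm(p,\bot,o)$; UKhm: $\mathcal{U}(p'\to p)\wedge\mathcal{U}(o\to o')\wedge\mathcal{U}(q\to q')\wedge\mathcal{K}hm(p,o,q)\to\mathcal{K}hm(p',o',q')$; and rules MP (from $\varphi$ and $\varphi\to\psi$ infer $\psi$), NECU (from $\varphi$ infer $\mathcal{U}\varphi$), SUB (uniform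 substitution: from $\varphi(p)$ infer $\varphi[\psi/p]$). Here $p,q,r,o,p',q',o'$ are proposition letters. *)

(* Defs.v *)
From mathcomp Require Import all_boot.
Set Implicit Arguments. Unset Strict Implicit. Unset Printing Implicit Defensive.

Inductive form (P : Type) : Type :=
| Var of P
| Neg of form P
| And of form P & form P
| Khm of form P & form P & form P.
Arguments Var {P}. Arguments Neg {P}. Arguments And {P}. Arguments Khm {P}.

Section Syntax.
Variable P : eqType.
Variable p0 : P.

Definition Top : form P := Neg (And (Var p0) (Neg (Var p0))).
Definition Bot : form P := Neg Top.
Definition Or (a b : form P) : form P := Neg (And (Neg a) (Neg b)).
Definition Imp (a b : form P) : form P := Neg (And a (Neg b)).
Definition U (a : form P) : form P := Khm (Neg a) Top Bot.

Fixpoint peval (v : form P -> bool) (f : form P) : bool :=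
  match f with
  | Var p => v (Var p)
  | Neg a => ~~ peval v a
  | And a b => peval v a && peval v b
  | Khm a c b => v (Khm a c b)
  end.
Definition tautology (f : form P) : Prop := forall v, peval v f = true.

Fixpoint subst (p : P) (psi : form P) (f : form P) : form P :=
  match f with
  | Var q => if q == p then psi else Var q
  | Neg a => Neg (subst p psi a)
  | And a b => And (subst p psi a) (subst p psi b)
  | Khm a c b => Khm (subst p psi a) (subst p psi c) (subst p psi b)
  end.

Definition V (p : P) : form P := Var p.

Inductive derivable : form P -> Prop :=
| D_taut f : tautology f -> derivable f
| D_DISTU p q : derivable (Imp (And (U (V p)) (U (Imp (V p) (V q)))) (U (V q)))
| D_TU p : derivable (Imp (U (V p)) (V p))
| D_4KhmU p o q : derivable (Imp (Khm (V p) (V o) (V q)) (U (Khm (V p) (V o) (V q))))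
| D_5KhmU p o q :
    derivable (Imp (Neg (Khm (V p) (V o) (V q))) (U (Neg (Khm (V p) (V o) (V q)))))
| D_EMPKhm p q : derivable (Imp (U (Imp (V p) (V q))) (Khm (V p) Bot (V q)))
| D_COMPKhm p o r q :
    derivable (Imp (And (And (Khm (V p) (V o) (V r)) (Khm (V r) (V o) (V q)))
                        (U (Imp (V r) (V o))))
                   (Khm (V p) (V o) (V q)))
| D_ONEKhm p o q :
    derivable (Imp (And (Khm (V p) (V o) (V q)) (Neg (Khm (V p) Bot (V q))))
                   (Khm (V p) Bot (V o)))
| D_UKhm p o q p' o' q' :
    derivable (Imp (And (And (And (U (Imp (V p') (V p))) (U (Imp (V o) (V o'))))
                             (U (Imp (V q) (V q'))))
                        (Khm (V p) (V o) (V q)))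
                   (Khm (V p') (V o') (V q')))
| D_MP f g : derivable f -> derivable (Imp f g) -> derivable g
| D_NECU f : derivable f -> derivable (U f)
| D_SUB f p psi : derivable f -> derivable (subst p psi f).
End Syntax.

Record model (P Sigma : Type) := Model {
  st : Type;
  st_inhabited : inhabited st;
  rel : Sigma -> st -> st -> Prop;
  val : st -> P -> Prop
}.

Section Semantics.
Variables (P Sigma : Type) (M : model P Sigma).

Fixpoint reach (s : st M) (sg : seq Sigma) (t : st M) : Prop :=
  match sg with
  | [::] => s = t
  | a :: sg' => exists u, @rel _ _ M a s u /\ reach u sg' t
  end.

(* sigma strongly chi-executable at s (sigma_k = prefix of length k). *)
Definition sexec (chi : st M -> Prop) (s : st M) (sg : seq Sigma) : Prop :=
  (forall sg1 a sg2 t, sg = sg1 ++ a :: sg2 -> reach s sg1 t ->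
       exists u, @rel _ _ M a t u) /\
  (forall sg1 sg2 t, sg = sg1 ++ sg2 -> sg1 <> [::] -> sg2 <> [::] ->
       reach s sg1 t -> chi t).

Fixpoint sat (f : form P) (s : st M) {struct f} : Prop :=
  match f with
  | Var p => @val _ _ M s p
  | Neg a => ~ sat a s
  | And a b => sat a s /\ sat b s
  | Khm a c b => exists sg : seq Sigma, forall s', sat a s' ->
        sexec (sat c) s' sg /\ (forall t, reach s' sg t -> sat b t)
  end.
End Semantics.

(* Main.v *)
Require Import Defs.
From mathcomp Require Import all_boot.
From Stdlib Require Import Classical ClassicalEpsilon.

Set Implicit Arguments. Unset Strict Implicit.

Section Aux.
Variables (P : eqType) (Sigma : Type).
Implicit Types (M : model P Sigma).

Lemma reach_cat M (s : st M) l1 l2 t :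
  reach s (l1 ++ l2) t <-> exists u, reach s l1 u /\ reach u l2 t.
Proof.
elim: l1 s => [|a l IH] s /=.
  by split; [move=> H; exists s | move=> [u [-> H]]].
split.
  move=> [u [Hr H]]; have [w [H1 H2]] := (proj1 (IH u) H).
  by exists w; split => //; exists u.
move=> [w [[u [Hr H1]] H2]]; exists u; split => //.
by apply/IH; exists w.
Qed.

Lemma exec_reach M (s : st M) sg :
  (forall sg1 a sg2 t, sg = sg1 ++ a :: sg2 -> reach s sg1 t ->
       exists u, @Defs.rel _ _ M a t u) -> exists t, reach s sg t.
Proof.
elim: sg s => [|a sg IH] s H /=; first by exists s.
have [u Hu] := H [::] a sg s erefl erefl.
have [t Ht] : exists t, reach u sg t.
  apply: IH => sg1 b sg2 t E R.
  by apply: (H (a :: sg1) b sg2 t); [rewrite E | exists u].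
by exists t; exists u.
Qed.

Lemma split_cat (T : Type) (l1 l2 m1 m2 : seq T) :
  l1 ++ l2 = m1 ++ m2 ->
  (exists k, m1 = l1 ++ k /\ l2 = k ++ m2) \/
  (exists k, l1 = m1 ++ k /\ m2 = k ++ l2).
Proof.
elim: l1 m1 => [|x l IH] m1 /=; first by move=> ->; left; exists m1.
case: m1 => [|y m1] /=; first by move=> <-; right; exists (x :: l).
case=> -> E; case: (IH _ E) => [[k [-> ->]]|[k [-> ->]]].
  by left; exists k.
by right; exists k.
Qed.

Variable p0 : P.

Lemma sat_Top M (s : st M) : @sat _ _ M (Top p0) s.
Proof. by move=> /= [H1 H2]. Qed.

Lemma sat_Bot M (s : st M) : ~ @sat _ _ M (Bot p0) s.
Proof. by move=> /= H; apply: H; apply: sat_Top. Qed.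

Lemma sat_Imp M (s : st M) a b : @sat _ _ M (Imp a b) s <-> (@sat _ _ M a s -> @sat _ _ M b s).
Proof. by rewrite /=; split => H; [move=> Ha; apply: NNPP => Hb; apply: H | move=> [Ha Hb]; apply/Hb/H]. Qed.

Lemma sat_U M (s : st M) a : @sat _ _ M (U p0 a) s <-> forall s', @sat _ _ M a s'.
Proof.
split.
  move=> [sg H] s'; apply: NNPP => na.
  have [[Hex _] Hr] := H s' na.
  have [t Ht] := exec_reach Hex.
  exact: (sat_Bot (Hr t Ht)).
move=> H; exists [::] => s' /= na; exfalso; exact: (na (H s')).
Qed.

Lemma sat_And M (s : st M) a b : @sat _ _ M (And a b) s <-> @sat _ _ M a s /\ @sat _ _ M b s.
Proof. by []. Qed.

Lemma sexec_mono M (c1 c2 : st M -> Prop) s sg :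
  (forall t, c1 t -> c2 t) -> sexec c1 s sg -> sexec c2 s sg.
Proof. by move=> H [H1 H2]; split => // *; apply/H/H2; eauto. Qed.

Lemma tauto_sound M (s : st M) f : tautology f -> @sat _ _ M f s.
Proof.
move=> T.
pose v := fun g => if excluded_middle_informative (@sat _ _ M g s) then true else false.
suff E : forall g, peval v g = true <-> @sat _ _ M g s by apply/E/T.
elim=> [p|a IHa|a IHa b IHb|a IHa c IHc b IHb] /=.
- by rewrite /v; case: excluded_middle_informative.
- split; first by move=> H Ha; move/IHa: Ha; case: (peval v a) H.
  by move=> H; case: (peval v a) (proj1 IHa) => // /(_ erefl).
- split; first by move/andP=> [/IHa ? /IHb ?].
  by move=> [/IHa -> /IHb ->].
- by rewrite /v; case: excluded_middle_informative.
Qed.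

Definition subM M (p : P) (psi : form P) : model P Sigma :=
  @Model P Sigma (st M) (st_inhabited M) (@Defs.rel _ _ M)
    (fun s q => if q == p then @sat _ _ M psi s else @Defs.val _ _ M s q).

Lemma sat_subM M p psi f (s : st M) :
  @sat _ _ (subM M p psi) f s <-> @sat _ _ M (subst p psi f) s.
Proof.
elim: f s => [q|a IHa|a IHa b IHb|a IHa c IHc b IHb] s /=.
- by case: (q == p).
- by rewrite IHa.
- by rewrite IHa IHb.
- split=> [[sg H]|[sg H]]; exists sg => s' Hs'.
  + have [Hx Hr] := H s' (proj2 (IHa s') Hs'); split.
      by apply: (sexec_mono _ Hx) => t /IHc.
    by move=> t /Hr /IHb.
  + have [Hx Hr] := H s' (proj1 (IHa s') Hs'); split.
      by apply: (sexec_mono _ Hx) => t /IHc.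
    by move=> t /Hr /IHb.
Qed.

End Aux.
Arguments sat_And {P Sigma M s a b}.
Arguments sat_U {P Sigma p0 M s a}.
Arguments sat_Imp {P Sigma M s a b}.
Arguments reach_cat {P Sigma M s l1 l2 t}.

Theorem mainTheorem1 (P Sigma : countType) (p0 : P) (a0 : Sigma) (f : form P) :
  derivable p0 f -> forall (M : model P Sigma) (s : st M), @sat P Sigma M f s.
Proof.
elim=> {f}.
- by move=> f T M s; apply: tauto_sound.
- move=> p q M s; apply/sat_Imp => /sat_And [/sat_U H1 /sat_U H2]; apply/sat_U => s'.
  exact: (proj1 sat_Imp (H2 s') (H1 s')).
- by move=> p M s; apply/sat_Imp => /sat_U H; apply: H.
- by move=> p o q M s; apply/sat_Imp => H; apply/sat_U.
- by move=> p o q M s; apply/sat_Imp => H; apply/sat_U.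
- move=> p q M s; apply/sat_Imp => /sat_U H; exists [::] => s' Hp; split.
    split; first by case.
    by move=> [|x l1] [|y l2] t.
  by move=> t /= <-; apply: (proj1 sat_Imp (H s')).
- move=> p o r q M s; apply/sat_Imp => /sat_And [/sat_And [[sg1 H1] [sg2 H2]] /sat_U Hro].
  exists (sg1 ++ sg2) => s' Hp.
  have [[E1 X1] R1] := H1 s' Hp.
  split; [split|].
  + move=> l1 a l2 t E R.
    case: (split_cat (esym E)) => [[k [Ek Ek2]]|[k [Ek Ek2]]].
      case: k Ek Ek2 => [|b k] Ek Ek2.
        rewrite cats0 in Ek; subst l1.
        have [[E2 _] _] := H2 t (R1 t R).
        by apply: (E2 [::] a l2 t) => //; rewrite Ek2.
      by case: Ek2 => -> _; apply: (E1 l1 b k t).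
    subst l1; have [u [Ru Rk]] := proj1 reach_cat R.
    have [[E2 _] _] := H2 u (R1 u Ru).
    exact: (E2 k a l2 t).
  + move=> l1 l2 t E n1 n2 R.
    case: (split_cat (esym E)) => [[k [Ek Ek2]]|[k [Ek Ek2]]].
      case: k Ek Ek2 => [|b k] Ek Ek2.
        rewrite cats0 in Ek; subst l1.
        exact: (proj1 sat_Imp (Hro t) (R1 t R)).
      by apply: (X1 l1 (b :: k) t).
    subst l1; clear E; case: k Ek2 R n1 => [|b k] Ek2 R n1.
      rewrite cats0 in R; exact: (proj1 sat_Imp (Hro t) (R1 t R)).
    have [u [Ru Rk]] := proj1 reach_cat R.
    have [[_ X2] _] := H2 u (R1 u Ru).
    exact: (X2 (b :: k) l2 t).
  + move=> t /reach_cat [u [Ru Rt]].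
    have [_ R2] := H2 u (R1 u Ru); exact: R2.
- move=> p o q M s; apply/sat_Imp => /sat_And [[sg H] N].
  case: sg H => [|a [|b rest]] H.
  + exfalso; apply: N; exists [::] => s' Hp; have [_ R] := H s' Hp; split.
      split; first by case.
      by move=> [|x l1] [|y l2] t.
    exact: R.
  + exfalso; apply: N; exists [:: a] => s' Hp; have [[E _] R] := H s' Hp; split => //.
    split => // => [[|x [|y l1]] [|z l2] t] //=.
  + exists [:: a] => s' Hp; have [[E X] _] := H s' Hp; split.
      split.
        move=> [|x l1] c l2 t /=; last by case=> _; case: l1.
        move=> [<- _] <-.
        exact: (E [::] a (b :: rest) s').
      by move=> [|x [|y l1]] [|z l2] t.
    move=> t R; have R' : reach s' [:: a] t by [].
    by apply: (X [:: a] (b :: rest) t erefl).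
- move=> p o q p' o' q' M s.
  apply/sat_Imp => /sat_And [/sat_And [/sat_And [/sat_U Hp /sat_U Ho] /sat_U Hq] [sg H]].
  exists sg => s' Hs'.
  have [Hx Hr] := H s' (proj1 sat_Imp (Hp s') Hs'); split.
    by apply: (sexec_mono _ Hx) => t; apply/(proj1 sat_Imp (Ho t)).
  by move=> t /Hr; apply/(proj1 sat_Imp (Hq t)).
- move=> f g _ Hf _ Hfg M s; exact: (proj1 sat_Imp (Hfg M s) (Hf M s)).
- by move=> f _ H M s; apply/sat_U.
- move=> f p psi _ H M s; apply/(@sat_subM _ _ M p psi); exact: H.
Qed.
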